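(* Fix $\Delta>0$. Suppose that to every $S\in V$ there is assigned a pair $(\mathrm{low}(S),\mathrm{sol}(S))\in\mathbb{R}\times\mathbb{R}^d$ (the output of the subroutine $\mathtt{SubtreeSolver}(S)$) such that $\|\mathrm{sol}(S)\|_0\le k$ for all $S\in V$ and (i) $\mathrm{low}(S)\le F(S)$ for every $S\in V$; (ii) there exists $S\in V^*$ with $P(\mathrm{sol}(S))\le \mathrm{low}(S)+\Delta$. Consider the following best-first search procedure. Initialize a min-priority queue containing only $\emptyset$ with key $\mathrm{low}(\emptyset)$; set $x_{\min}\leftarrow \mathrm{sol}(\emptyset)$ and $P_{\min}\leftarrow P(x_{\min})$. While the queue is nonempty: pop a node $S$ of smallest key (ties broken arbitrarily); if $P(\mathrm{sol}(S))\le \mathrm{low}(S)+\Delta$, return $\mathrm{sol}(S)$ and stop; otherwise, for each child $T$ of $S$ in $G$ (i.e., each $T$ with $(S,T)\in E$): if $\mathrm{low}(T)>P_{\min}$, the node $T$ may either be discarded (pruned) or processed as follows, and if $\mathrm{low}(T)\le P_{\min}$ it must be processed as follows: push $T$ with key $\mathrm{low}(T)$, and if $P(\mathrm{sol}(T))<P_{\min}$ set $x_{\min}\leftarrow\mathrm{sol}(T)$ and $P_{\min}\leftarrow P(x_{\min})$. Then this procedure always halts at the return step, and the returned vector $x$ satisfies $\|x\|_0\le k$ and $P(x)\le P(x^* )+\Delta$.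
   Context: Let $d,k$ be positive integers with $k\le d$, and let $[d]=\{1,\dots,d\}$ with its usual order. For nonempty $S\subseteq[d]$, $\max S$ is its largest element; set $\max\emptyset=0$. For $x\in\mathbb{R}^d$, $\mathrm{supp}(x)=\{i: x_i\neq 0\}$ and $\|x\|_0=|\mathrm{supp}(x)|$. The state-space tree $G=(V,E)$ is defined by $V=\{S\subseteq[d]: |S|\le k \text{ and } k-|S|\le d-\max S\}$, with a directed edge $(S,T)\in E$ for $S,T\in V$ iff $T\neq\emptyset$ and $S=T\setminus\{\max T\}$ (then $T$ is a child of $S$). For $S\in V$, $\mathrm{desc}(S)\subseteq V$ denotes the set consisting of $S$ and all its descendants in $G$, and $U(S)=\{x\in\mathbb{R}^d: \mathrm{supp}(x)\subseteq S' \text{ for some } S'\in\mathrm{desc}(S)\}$. Let $P:\mathbb{R}^d\to\mathbb{R}$ be a function and let $x^*$ be an optimal solution of $\min\{P(x): \|x\|_0\le k\}$ (assumed to exist). Define $F(S)=\inf\{P(x): x\in U(S)\}$ for $S\in V$, and $V^*=\{S\in V: x^*\in U(S)\}$. *)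

(* Defs.v *)
From HB Require Import structures.
From mathcomp Require Import all_boot all_order all_algebra.
Set Implicit Arguments.
Unset Strict Implicit.
Unset Printing Implicit Defensive.
Import Order.TTheory GRing.Theory Num.Theory.
Local Open Scope ring_scope.

(* Coordinates [d] = {1,..,d} are represented by 'I_d = {0,..,d-1}:
   ordinal i stands for the integer i+1. *)

Section Tree.
Variables (d k : nat).

(* max S (as an element of {0,..,d}, with max emptyset = 0). *)
Definition maxS (S : {set 'I_d}) : nat := (\max_(i in S) (i : nat).+1)%N.

Definition inV (S : {set 'I_d}) : bool :=
  (#|S| <= k)%N && (k - #|S| <= d - maxS S)%N.

Definition remove_max (T : {set 'I_d}) : {set 'I_d} :=
  T :\: [set i : 'I_d | (i : nat).+1 == maxS T].

Definition edge : rel {set 'I_d} :=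
  fun S T => [&& inV S, inV T, T != set0 & S == remove_max T].

Definition desc (S : {set 'I_d}) : {set {set 'I_d}} := [set T | connect edge S T].

Definition children (S : {set 'I_d}) : {set {set 'I_d}} := [set T | edge S T].
End Tree.

Section Vectors.
Variables (R : realFieldType) (d k : nat).

Definition supp (x : 'rV[R]_d) : {set 'I_d} := [set i | x 0 i != 0].
Definition norm0 (x : 'rV[R]_d) : nat := #|supp x|.

Definition inU (S : {set 'I_d}) (x : 'rV[R]_d) : Prop :=
  exists2 S', S' \in desc k S & supp x \subset S'.

(* a <= F(S) = inf { P x : x \in U(S) }, i.e. a is a lower bound of P on U(S) *)
Definition le_F (P : 'rV[R]_d -> R) (a : R) (S : {set 'I_d}) : Prop :=
  forall x, inU S x -> a <= P x.

Definition inVstar (xstar : 'rV[R]_d) (S : {set 'I_d}) : Prop :=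
  inV k S /\ inU S xstar.

(* Best-first search as a nondeterministic transition system.
   Queue: a multiset (list) of nodes; the key of a node T is low T.
   x_min is stored; P_min is always P x_min. *)
Inductive state :=
| Loop of seq {set 'I_d} & 'rV[R]_d
      (* while-loop test: queue, x_min *)
| Expand of seq {set 'I_d} & 'rV[R]_d & seq {set 'I_d}
      (* processing children: queue, x_min, children still to handle *)
| Done of 'rV[R]_d.

Variables (P : 'rV[R]_d -> R) (Delta : R)
          (low : {set 'I_d} -> R) (sol : {set 'I_d} -> 'rV[R]_d).

Inductive step : state -> state -> Prop :=
| step_return q xm S :
    S \in q -> (forall S', S' \in q -> low S <= low S') ->
    P (sol S) <= low S + Delta ->
    step (Loop q xm) (Done (sol S))
| step_expand q xm S cs :
    S \in q -> (forall S', S' \in q -> low S <= low S') ->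
    ~~ (P (sol S) <= low S + Delta) ->
    perm_eq cs (enum (children k S)) ->
    step (Loop q xm) (Expand (rem S q) xm cs)
| step_prune q xm T cs :
    P xm < low T ->                       (* optional pruning *)
    step (Expand q xm (T :: cs)) (Expand q xm cs)
| step_push q xm T cs :
    step (Expand q xm (T :: cs))
         (Expand (T :: q) (if P (sol T) < P xm then sol T else xm) cs)
| step_endloop q xm :
    step (Expand q xm [::]) (Loop q xm).

Definition init_state : state := Loop [:: set0] (sol set0).

Inductive reachable : state -> Prop :=
| reach_init : reachable init_state
| reach_step s s' : reachable s -> step s s' -> reachable s'.

End Vectors.

(* Main.v *)
Require Import Defs.
From HB Require Import structures.
From mathcomp Require Import all_boot all_order all_algebra.
From mathcomp Require Import zify.
Import Order.TTheory GRing.Theory Num.Theory.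
Set Implicit Arguments.
Unset Strict Implicit.

Section Comb.
Variables (d k : nat).

Lemma maxS_set0 : maxS (set0 : {set 'I_d}) = 0%N.
Proof. by rewrite /maxS big_set0. Qed.

Lemma maxS_ex (S : {set 'I_d}) : S != set0 ->
  exists2 i, i \in S & maxS S = (i : nat).+1 /\ remove_max S = S :\ i.
Proof.
move=> hS.
have h0 : (0 < #|S|)%N by rewrite card_gt0.
have [i iS hi] := eq_bigmax_cond (fun i : 'I_d => (i : nat).+1) h0.
exists i => //; split; first by [].
rewrite /remove_max /maxS hi; congr (_ :\: _).
by apply/setP => j; rewrite !inE eqSS.
Qed.

Lemma maxS_le (S : {set 'I_d}) : (maxS S <= d)%N.
Proof. by apply/bigmax_leqP => i _; exact: ltn_ord. Qed.

Lemma edge_card (S T : {set 'I_d}) : edge k S T -> (#|S| < #|T|)%N.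
Proof.
case/and4P => _ _ hT /eqP ->.
have [i iT [_ ->]] := maxS_ex hT.
by rewrite (cardsD1 i T) iT.
Qed.

Lemma inV_remove (S : {set 'I_d}) : inV k S -> S != set0 -> inV k (remove_max S).
Proof.
case/andP => h1 h2 hS.
have [i iS [hm ->]] := maxS_ex hS.
have hc := cardsD1 i S; rewrite iS in hc.
have hmx : (maxS (S :\ i) <= i)%N.
  apply/bigmax_leqP => j; rewrite !inE => /andP [ji jS].
  have := @leq_bigmax_cond _ (fun x => x \in S) (fun j : 'I_d => (j:nat).+1) j jS.
  rewrite -/(maxS S) hm ltnS leq_eqVlt => /orP [/eqP/val_inj e|//].
  by rewrite e eqxx in ji.
have hi := ltn_ord i. rewrite hm in h2.
rewrite /inV; apply/andP; split; lia.
Qed.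

Lemma root (S : {set 'I_d}) : inV k S -> connect (edge k) set0 S.
Proof.
move Hn : #|S| => n; elim: n S Hn => [|n IH] S Hn hV.
  by move/eqP: Hn; rewrite cards_eq0 => /eqP ->; exact: connect0.
have hS : S != set0 by rewrite -card_gt0 Hn.
have hV' := inV_remove hV hS.
have [i iS [_ hr]] := maxS_ex hS.
apply: connect_trans (IH (remove_max S) _ hV') (connect1 _).
  by move: Hn; rewrite (cardsD1 i S) iS hr add1n => -[].
by rewrite /edge hV' hV hS eqxx.
Qed.

Lemma connect_step (S T : {set 'I_d}) : connect (edge k) S T -> S != T ->
  exists2 U, edge k S U & connect (edge k) U T.
Proof.
case/connectP => -[|U p] /=; first by move=> _ ->; rewrite eqxx.
case/andP => e hp -> _; exists U => //; apply/connectP; by exists p.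
Qed.
End Comb.
Section Term.
Variables (R : realFieldType) (d k : nat).
Definition N := #|{set 'I_d}|.
Arguments N : simpl never.
Definition fS (S : {set 'I_d}) : nat := (N.+1 ^ (d - #|S|))%N.
Definition Phi (q : seq {set 'I_d}) : nat := (\sum_(T <- q) fS T)%N.
Definition mu (s : state R d) : nat :=
  match s with
  | Loop q _ => (N.+2 * Phi q)%N
  | Expand q _ cs => (N.+2 * (Phi q + Phi cs) + size cs + 1)%N
  | Done _ => 0%N
  end.

Lemma Phi_bound (cs : seq {set 'I_d}) c :
  (forall T, T \in cs -> fS T <= c)%N -> (Phi cs <= size cs * c)%N.
Proof.
elim: cs => [|T cs IH] h; first by rewrite /Phi big_nil.
rewrite /Phi big_cons -/(Phi cs) /= mulSn leq_add ?h ?mem_head //.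
by apply: IH => U hU; apply: h; rewrite inE hU orbT.
Qed.

Lemma Phi_children (S : {set 'I_d}) cs :
  perm_eq cs (enum (children k S)) -> (Phi cs < fS S)%N.
Proof.
move=> hp.
have hsz : (size cs <= N)%N by rewrite (perm_size hp) -cardE /N max_card.
have hmem : forall T, T \in cs -> edge k S T.
  by move=> T; rewrite (perm_mem hp) mem_enum inE.
case: cs hp hsz hmem => [|T0 cs'] hp hsz hmem.
  by rewrite /Phi big_nil /fS expn_gt0.
have hS0 : (#|S| < d)%N.
  have := edge_card (hmem T0 (mem_head _ _)).
  have : (#|T0| <= #|'I_d|)%N := max_card _; rewrite card_ord; lia.
have hb := @Phi_bound (T0 :: cs') (N.+1 ^ (d - #|S|).-1)%N.
have hb' : (Phi (T0 :: cs') <= size (T0 :: cs') * N.+1 ^ (d - #|S|).-1)%N.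
  apply: hb => T hT; rewrite /fS leq_pexp2l //.
  have := edge_card (hmem T hT); have : (#|T| <= #|'I_d|)%N := max_card _; rewrite card_ord; lia.
have -> : fS S = (N.+1 * N.+1 ^ (d - #|S|).-1)%N.
  by rewrite /fS -expnS prednK // subn_gt0.
apply: (leq_ltn_trans hb'); rewrite ltn_pmul2r ?expn_gt0 //.
Qed.

Lemma step_mu P Delta low sol (s s' : state R d) :
  step k P Delta low sol s s' -> (mu s' < mu s)%N.
Proof.
case=> [q xm S hS _ _|q xm S cs hS _ _ hp|q xm T cs _|q xm T cs|q xm]; rewrite /mu.
- timeout 10 (by rewrite muln_gt0 /Phi (big_rem _ hS) /= ltn_addr // /fS expn_gt0).
-
  have h1 := Phi_children hp.
  have hsz : (size cs <= N)%N by rewrite (perm_size hp) -cardE /N max_card.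
  have e : Phi q = (fS S + Phi (rem S q))%N by rewrite /Phi (big_rem _ hS).
  rewrite e.
  have h2 : (N.+2 * (Phi cs).+1 <= N.+2 * fS S)%N by rewrite leq_mul2l h1 orbT.
  move: h2; rewrite !mulnDr mulnS.
  move: (N.+2 * fS S)%N (N.+2 * Phi cs)%N (N.+2 * Phi (rem S q))%N => x y z.
  move: hsz; move: (size cs) N => a b; timeout 10 lia.
- change (size (T :: cs)) with (size cs).+1.
  rewrite /Phi big_cons -/(Phi q) -/(Phi cs).
  rewrite !mulnDr; move: (N.+2 * Phi q)%N (N.+2 * Phi cs)%N (N.+2 * fS T)%N => x y z.
  timeout 10 lia.
- change (size (T :: cs)) with (size cs).+1.
  rewrite /Phi !big_cons -/(Phi q) -/(Phi cs).
  rewrite !mulnDr; move: (N.+2 * Phi q)%N (N.+2 * Phi cs)%N (N.+2 * fS T)%N => x y z.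
  timeout 10 lia.
- timeout 10 lia.
Qed.

Lemma term P Delta low sol (s : state R d) :
  Acc (fun s' s => step k P Delta low sol s s') s.
Proof.
move: {2}(mu s).+1 (ltnSn (mu s)) => n; elim: n s => [|n IH] s hs; first by rewrite ltn0 in hs.
constructor => s' hst; apply: IH; have := step_mu hst; timeout 10 lia.
Qed.
End Term.

Lemma seq_min (R : realFieldType) (T : eqType) (f : T -> R) (q : seq T) :
  q != [::] -> exists2 S, S \in q & forall S', S' \in q -> (f S <= f S')%R.
Proof.
elim: q => [//|a q IH] _.
case: q IH => [|b q] IH.
  by exists a; rewrite ?mem_head // => S'; rewrite inE => /eqP ->.
have [S hS hm] := IH isT.
case/orP: (le_total (f a) (f S)) => h.
  exists a; first exact: mem_head.
  move=> S'; rewrite inE => /orP [/eqP -> //| h']; exact: le_trans h (hm _ h').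
exists S; first by rewrite inE hS orbT.
move=> S'; rewrite inE => /orP [/eqP -> //| h']; exact: hm.
Qed.

Local Open Scope ring_scope.

Theorem theorem1 (R : realFieldType) (d k : nat)
  (hk0 : (0 < k)%N) (hkd : (k <= d)%N)
  (P : 'rV[R]_d -> R) (xstar : 'rV[R]_d)
  (hxs : (norm0 xstar <= k)%N)
  (hopt : forall x : 'rV[R]_d, (norm0 x <= k)%N -> P xstar <= P x)
  (Delta : R) (hDelta : 0 < Delta)
  (low : {set 'I_d} -> R) (sol : {set 'I_d} -> 'rV[R]_d)
  (hsol : forall S, inV k S -> (norm0 (sol S) <= k)%N)
  (hlow : forall S, inV k S -> le_F k P (low S) S)
  (hstar : exists2 S, inVstar k xstar S & P (sol S) <= low S + Delta) :
  Acc (fun s' s => step k P Delta low sol s s') (init_state sol) /\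
  (forall s, reachable k P Delta low sol s ->
     (forall s', ~ step k P Delta low sol s s') ->
     exists x, s = Done x /\ (norm0 x <= k)%N /\ P x <= P xstar + Delta).
Proof.
split; first exact: term.
have [Sst [hVst hUst] hst] := hstar.
have lowle : forall T, inV k T -> connect (edge k) T Sst -> low T <= P xstar.
  move=> T hT hc; apply: (hlow T hT).
  case: hUst => S' hS' hsub; exists S' => //.
  move: hS'; rewrite /desc !inE => hS'; exact: connect_trans hc hS'.
have hV0 : inV k (set0 : {set 'I_d}).
  by rewrite /inV cards0 maxS_set0 !subn0 hkd.
pose Inv (s : state R d) : Prop := match s with
 | Loop q xm => (forall S, S \in q -> inV k S) /\ (norm0 xm <= k)%N /\
                exists2 T, T \in q & connect (edge k) T Sst
 | Expand q xm cs => (forall S, S \in q ++ cs -> inV k S) /\ (norm0 xm <= k)%N /\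
                exists2 T, T \in q ++ cs & connect (edge k) T Sst
 | Done x => (norm0 x <= k)%N /\ P x <= P xstar + Delta end.
have hinv : forall s, reachable k P Delta low sol s -> Inv s.
  move=> s; elim => [|s0 s1 _ IH hs].
    split; first by move=> S; rewrite inE => /eqP ->.
    split; first exact: hsol.
    by exists set0; [rewrite inE | exact: root].
  case: hs IH => /=.
  - move=> q xm S hS hmin hret [hq [hx [T hT hc]]]; split; first exact: hsol (hq _ hS).
    apply: (le_trans hret); rewrite lerD2r.
    exact: le_trans (hmin _ hT) (lowle _ (hq _ hT) hc).
  - move=> q xm S cs hS hmin hret hp [hq [hx [T hT hc]]].
    have hch : forall U, U \in cs -> edge k S U.
      by move=> U; rewrite (perm_mem hp) mem_enum inE.
    split.
      move=> U; rewrite mem_cat => /orP [/mem_rem h | /hch]; first exact: hq.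
      by case/and4P.
    split; first exact: hx.
    case: (eqVneq T S) => [eTS | ne].
      subst T.
      have nS : S != Sst by apply/eqP => eS; subst S; rewrite hst in hret.
      have [U hU hUc] := connect_step hc nS.
      exists U => //; rewrite mem_cat orbC.
      by rewrite (perm_mem hp) mem_enum inE hU.
    by exists T => //; rewrite mem_cat (rem_mem ne hT).
  - move=> q xm T cs hlt [hq [hx [T0 hT0 hc]]].
    split.
      move=> U hU; apply: hq; move: hU; rewrite !mem_cat !inE.
      by case: (U \in q); case: (U == T).
    split; first exact: hx.
    case: (eqVneq T0 T) => [eT | ne].
      subst T0.
      have hVT : inV k T by apply: hq; rewrite mem_cat inE eqxx orbT.
      have := le_trans (lowle _ hVT hc) (hopt _ hx).
      by rewrite leNgt hlt.
    exists T0 => //; move: hT0; rewrite !mem_cat !inE (negbTE ne).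
    by case: (T0 \in q).
  - move=> q xm T cs [hq [hx [T0 hT0 hc]]].
    have memE : forall U, (U \in (T :: q) ++ cs) = (U \in q ++ T :: cs).
      by move=> U; rewrite !mem_cat !inE; case: (U \in q); case: (U == T).
    split; first by move=> U; rewrite memE; exact: hq.
    split.
      case: ifP => _ //; apply: hsol; apply: hq.
      by rewrite mem_cat inE eqxx orbT.
    by exists T0; rewrite ?memE.
  - move=> q xm [hq [hx [T hT hc]]].
    by split; [|split; [|exists T]]; move: hq hT; rewrite cats0 => //.
move=> s hr hstuck; have := hinv s hr; case: s hr hstuck => [q xm|q xm cs|x] hr hstuck /=.
- case=> hq [hx [T hT hc]].
  have hq0 : q != [::] by case: q hT {hq hr hstuck}.
  have [S hS hmin] := seq_min low hq0.
  case: (boolP (P (sol S) <= low S + Delta)) => hP.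
    by case: (hstuck _ (step_return k xm hS hmin hP)).
  by case: (hstuck _ (step_expand xm hS hmin hP (perm_refl _))).
- case: cs hr hstuck => [|T cs] hr hstuck _.
    by case: (hstuck _ (step_endloop k P Delta low sol q xm)).
  by case: (hstuck _ (step_push k P Delta low sol q xm T cs)).
- by move=> h; exists x.
Qed.
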